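(* Let $f$ be a successor function for a geometry $(G,I,O)$ and let $\mathcal P_f$ be its induced path cover. Then $f$ is a flow function (i.e. there is a partial order $\le$ on $V(G)$ with $(f,\le)$ a flow) if and only if $\mathcal P_f$ is a causal path cover.
   Context: Graphs are finite, simple, undirected, without self-loops; $v\sim w$ denotes adjacency. A geometry is $(G,I,O)$ with $I,O\subseteq V(G)$; $O^c=V(G)\setminus O$, $I^c=V(G)\setminus I$. A flow for $(G,I,O)$ is a pair $(f,\le)$, $f:O^c\to I^c$, $\le$ a partial order on $V(G)$, with, for all $v\in O^c$, $w\in V(G)$: $v\sim f(v)$; $v\le f(v)$; $w\sim f(v)\Rightarrow v\le w$. A path cover of $(G,I,O)$ is a collection of directed paths in $G$ (possibly trivial) such that every vertex lies on exactly one path, each path meets $I$ at most at its initial vertex, and each path meets $O$ exactly at its final vertex. A successor function is an injective $f:O^c\to I^c$ with $v\sim f(v)$ such that the arcs $v\to f(v)$ ($v\in O^c$) form a path cover, denoted $\mathcal P_f$. For a family $\mathcal P$ of vertex-disjoint directed paths, an edge is covered by $\mathcal P$ if it underlies an arc of a path of $\mathcal P$. An influencing walk for $\mathcal P$ is a walk that is a concatenation of zero or more segments of the types (i) $v\to w$, an arc of a path of $\mathcal P$; (ii) $v\to z\to w$ with $v\to z$ an arc of a path of $\mathcal P$ and $zw\in E(G)$ not covered by $\mathcal P$. A vicious circuit for $\mathcal P$ is a closed influencing walk (starting and ending at the same vertex) with at least one segment. A causal path cover is a path cover with no vicious circuits. *)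

(* Defs.v *)
From mathcomp Require Import all_boot.
Set Implicit Arguments. Unset Strict Implicit. Unset Printing Implicit Defensive.

Section Defs.
Variable T : finType.

Definition simple_graph (e : rel T) : Prop := symmetric e /\ irreflexive e.

Definition path_cover (e : rel T) (I O : {set T}) (P : seq (seq T)) : Prop :=
  (forall p, p \in P -> exists x q,
       [/\ p = x :: q, path e x q, all (fun y => y \notin I) q,
           all (fun y => y \notin O) (belast x q) & last x q \in O])
  /\ (forall v : T, count_mem v (flatten P) = 1%N).

Definition arcP (P : seq (seq T)) (v w : T) : Prop :=
  exists p, p \in P /\ exists p1 p2, p = p1 ++ v :: w :: p2.

Definition induced_by (O : {set T}) (f : T -> T) (P : seq (seq T)) : Prop :=
  forall v w, arcP P v w <-> (v \notin O /\ f v = w).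

(* Successor function (f is only meaningful on O^c). *)
Definition successor_function (e : rel T) (I O : {set T}) (f : T -> T) : Prop :=
  [/\ (forall v w, v \notin O -> w \notin O -> f v = f w -> v = w),
      (forall v, v \notin O -> e v (f v) /\ f v \notin I)
    & exists P, path_cover e I O P /\ induced_by O f P].

Definition covered (P : seq (seq T)) (z w : T) : Prop := arcP P z w \/ arcP P w z.

Definition infl_segment (e : rel T) (P : seq (seq T)) (v w : T) : Prop :=
  arcP P v w \/ exists z, [/\ arcP P v z, e z w & ~ covered P z w].

Fixpoint pwalk (R : T -> T -> Prop) (x : T) (s : seq T) : Prop :=
  match s with
  | [::] => True
  | y :: s' => R x y /\ pwalk R y s'
  end.

(* A vicious circuit: a closed influencing walk with at least one segment;
   the walk is given by its start x and the endpoints s of its segments. *)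
Definition has_vicious_circuit (e : rel T) (P : seq (seq T)) : Prop :=
  exists x s, [/\ s <> [::], pwalk (infl_segment e P) x s & last x s = x].

Definition causal_path_cover (e : rel T) (I O : {set T}) (P : seq (seq T)) : Prop :=
  path_cover e I O P /\ ~ has_vicious_circuit e P.

Definition is_flow (e : rel T) (I O : {set T}) (f : T -> T) (le : rel T) : Prop :=
  [/\ reflexive le, antisymmetric le, transitive le
    & forall v, v \notin O ->
        [/\ f v \notin I, e v (f v), le v (f v)
          & forall w, e w (f v) -> le v w]].

Definition flow_function (e : rel T) (I O : {set T}) (f : T -> T) : Prop :=
  exists le : rel T, is_flow e I O f le.

End Defs.

(* Main.v *)
Require Import Defs.
From mathcomp Require Import all_boot.
From Stdlib Require Import ClassicalEpsilon.
Set Implicit Arguments. Unset Strict Implicit. Unset Printing Implicit Defensive.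

Section Proof.
Variables (T : finType) (e : rel T) (I O : {set T}) (f : T -> T)
    (P : seq (seq T)).

Definition rb (v w : T) : bool :=
  if excluded_middle_informative (infl_segment e P v w) then true else false.

Lemma rbP v w : rb v w -> infl_segment e P v w.
Proof. by rewrite /rb; case: excluded_middle_informative. Qed.

Lemma rbI v w : infl_segment e P v w -> rb v w.
Proof. by rewrite /rb; case: excluded_middle_informative. Qed.

Lemma path_pwalk x s : path rb x s -> pwalk (infl_segment e P) x s.
Proof.
elim: s x => [//|y s IH] x /= /andP [H1 H2]; split; [exact: rbP | exact: IH].
Qed.

Lemma fwd_seg (le : rel T) : simple_graph e -> induced_by O f P ->
  is_flow e I O f le -> forall v w, infl_segment e P v w -> le v w /\ v <> w.
Proof.
move=> [Hsym Hirr] Hind [Hr Ha Ht Hfl] v w [Harc|[z [Harc Hzw Hnc]]].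
- have [HvO Hf] := (Hind v w).1 Harc.
  have [_ He Hle _] := Hfl v HvO; subst w; split => // Heq.
  by move: He; rewrite -Heq Hirr.
- have [HvO Hf] := (Hind v z).1 Harc.
  have [_ He Hle Hw] := Hfl v HvO; subst z; split.
  + by apply: Hw; rewrite Hsym.
  + move=> Heq; subst w; apply: Hnc; by right.
Qed.

End Proof.

Theorem mainTheorem5 (T : finType) (e : rel T) (I O : {set T}) (f : T -> T)
    (Pf : seq (seq T)) :
  simple_graph e ->
  successor_function e I O f ->
  path_cover e I O Pf -> induced_by O f Pf ->
  (flow_function e I O f <-> causal_path_cover e I O Pf).
Proof.
move=> Hg [Hinj Hsf _] Hpc Hind; split.
- move=> [le Hfl]; split => //; move=> [x [s [Hne Hw Hl]]].
  have [Hr Ha Ht _] := Hfl.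
  have key : forall x s, s <> [::] -> pwalk (infl_segment e Pf) x s ->
      le x (last x s) /\ x <> last x s.
    move=> {Hne Hw Hl x s}.
    move=> x s; elim: s x => [//|y s IH] x _ /= [H1 H2].
    have [Hxy Nxy] := fwd_seg Hg Hind Hfl H1.
    case: s IH H2 => [|y' s'] IH H2; first by [].
    have [Hyl Nyl] := IH y ltac:(by []) H2.
    split; first exact: Ht Hyl.
    move=> Heq; apply: Nxy; apply: Ha; rewrite Hxy /=; rewrite -[last y _]Heq in Hyl; exact: Hyl.
  by have [_ N] := key x s Hne Hw; apply: N.
- move=> [_ Hnv].
  exists (connect (rb e Pf)); split.
  + exact: connect0.
  + move=> x y /andP [/connectP [p Hp Hy] /connectP [q Hq Hx]].
    apply/eqP; apply/negPn/negP => Nxy; apply: Hnv.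
    exists x, (p ++ q); split.
    * case: p Hp Hy => [|? ?] _ Hy; last by [].
      by move: Nxy; rewrite /= Hy eqxx.
    * apply: (@path_pwalk T e Pf); rewrite cat_path Hp /= -Hy; exact: Hq.
    * by rewrite last_cat -Hy.
  + exact: connect_trans.
  + move=> v HvO; have [He HnI] := Hsf v HvO.
    have Harc : arcP Pf v (f v) by apply/(Hind v (f v)).
    have Hseg : connect (rb e Pf) v (f v).
      by apply: connect1; apply: rbI; left.
    split => // w Hw.
    have [Hsym Hirr] := Hg.
    case: (classic (covered Pf (f v) w)) => Hc.
    * case: Hc => Hc.
      -- have [HfO Hff] := (Hind _ _).1 Hc.
         apply: connect_trans Hseg _; apply: connect1; apply: rbI; left.
         by apply/(Hind _ _); split.
      -- have [HwO Hfw] := (Hind _ _).1 Hc.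
         by rewrite (Hinj _ _ HvO HwO (esym Hfw)) connect0.
    * apply: connect1; apply: rbI; right; exists (f v); split => //.
      by rewrite Hsym.
Qed.
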